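(* Let $G$ be a nontrivial finite subgroup of $\mathrm{SO}(3)$ and let $g:\mathrm{SO}(3)\to\mathbb{R}^n$ be an embedding. Then there does not exist a continuous function $f:\mathrm{SO}(3)/G\to g[\mathrm{SO}(3)]$ such that $p_G(g^{-1}(f(\mathcal{R})))=\mathcal{R}$ for every $\mathcal{R}\in\mathrm{SO}(3)/G$.
   Context: $\mathrm{SO}(3)/G$ denotes the space of left cosets $RG$ ($R\in\mathrm{SO}(3)$) with the quotient topology, and $p_G:\mathrm{SO}(3)\to\mathrm{SO}(3)/G$, $R\mapsto RG$, is the quotient map. An embedding is a continuous injective map that is a homeomorphism onto its image $g[\mathrm{SO}(3)]$. *)

(* Defs.v *)
From HB Require Import structures.
From mathcomp Require Import all_boot all_order all_algebra generic_quotient.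
From mathcomp Require Import all_classical all_reals all_analysis.
Set Implicit Arguments. Unset Strict Implicit. Unset Printing Implicit Defensive.
Import Order.TTheory GRing.Theory Num.Theory.
Import numFieldNormedType.Exports.
Local Open Scope classical_set_scope.
Local Open Scope ring_scope.
Local Open Scope quotient_scope.

Definition SO3set (R : realType) : set 'M[R]_3 :=
  [set M | M *m M^T = 1%:M /\ \det M = 1].

(* SO(3) as a topological space: the subspace (initial) topology on the
   subtype, inherited from the Euclidean topology of 'M[R]_3. *)
Notation SO3 R := (set_type (@SO3set R)).

Record finSubgroupSO3 (R : realType) := FinSubgroupSO3 {
  fsg_set :> set 'M[R]_3;
  fsg_finite : finite_set fsg_set;
  fsg_sub : fsg_set `<=` @SO3set R;
  fsg_one : fsg_set 1%:M;
  fsg_mul : forall A B, fsg_set A -> fsg_set B -> fsg_set (A *m B);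
  fsg_inv : forall A, fsg_set A -> fsg_set (invmx A) }.

Section coset.
Variables (R : realType) (G : finSubgroupSO3 R).

(* x ~ y  iff  y G = x G  iff  x^{-1} y \in G *)
Definition coset_rel (x y : SO3 R) : bool :=
  `[< fsg_set G (invmx (val x) *m val y) >].

Lemma SO3_unit (x : SO3 R) : val x \in unitmx.
Proof.
case: x => M /= /set_mem [_ dM]. by rewrite unitmxE dM unitr1.
Qed.

Lemma coset_rel_refl : reflexive coset_rel.
Proof.
move=> x; apply/asboolP; rewrite mulVmx ?SO3_unit //; exact: fsg_one.
Qed.

Lemma coset_rel_sym : symmetric coset_rel.
Proof.
suff H : forall x y, coset_rel x y -> coset_rel y x.
  by move=> x y; apply/idP/idP; apply: H.
move=> x y /asboolP Gxy; apply/asboolP.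
have PQ : (invmx (val x) *m val y) *m (invmx (val y) *m val x) = 1%:M.
  by rewrite -mulmxA (mulmxA (val y)) mulmxV ?SO3_unit // mul1mx mulVmx ?SO3_unit.
have uP : invmx (val x) *m val y \in unitmx by case: (mulmx1_unit PQ).
have := fsg_inv Gxy.
by rewrite -[invmx (_ *m _)]mulmx1 -PQ mulmxA mulVmx // mul1mx.
Qed.

Lemma coset_rel_trans : transitive coset_rel.
Proof.
move=> y x z /asboolP Gxy /asboolP Gyz; apply/asboolP.
have := fsg_mul Gxy Gyz.
by rewrite -mulmxA (mulmxA (val y)) mulmxV ?SO3_unit // mul1mx.
Qed.

Canonical coset_equiv := EquivRel coset_rel coset_rel_refl coset_rel_sym
  coset_rel_trans.

Definition SO3modG : Type := quotient_topology {eq_quot coset_equiv}.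

Definition pG : SO3 R -> SO3modG := \pi_SO3modG.

End coset.

(* An embedding: continuous, injective, homeomorphism onto its image
   g[SO(3)] = range g (with the subspace topology). *)
Definition embedding (X Y : topologicalType) (g : X -> Y) : Prop :=
  [/\ continuous g, injective g &
      exists h : set_type (range g) -> X,
        continuous h /\ (forall y, g (h y) = val y)].

(* Main.v *)
Require Import Defs.
From HB Require Import structures.
From mathcomp Require Import all_boot all_order all_algebra generic_quotient.
From mathcomp Require Import all_classical all_reals all_analysis.
From mathcomp Require Import ring lra.
Import Order.TTheory GRing.Theory Num.Theory.
Import numFieldNormedType.Exports.
Local Open Scope classical_set_scope.
Local Open Scope ring_scope.
Local Open Scope quotient_scope.

Section Helpers.
Variable R : realType.
Implicit Types (A B X : 'M[R]_3).

Lemma ord3E (P : 'I_3 -> Prop) : P 0 -> P 1 -> P 2%:R -> forall i, P i.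
Proof.
move=> h0 h1 h2 [[|[|[|//]]] Hi].
- by rewrite (_ : Ordinal Hi = 0) //; apply: val_inj.
- by rewrite (_ : Ordinal Hi = 1) //; apply: val_inj.
- by rewrite (_ : Ordinal Hi = 2%:R) //; apply: val_inj.
Qed.

Lemma mul3E A B i j : (A *m B) i j = A i 0 * B 0 j + A i 1 * B 1 j + A i 2%:R * B 2%:R j.
Proof.
rewrite mxE !big_ord_recl big_ord0 addr0 addrA.
congr (_ * _ + _ * _ + _ * _); by congr (_ _ _); apply: val_inj.
Qed.

Definition mk3 (f : nat -> nat -> R) : 'M[R]_3 := \matrix_(i, j) f i j.

Lemma mk3E f i j : mk3 f i j = f i j. Proof. by rewrite mxE. Qed.

Lemma det3 A : \det A =
  A 0 0 * (A 1 1 * A 2%:R 2%:R - A 1 2%:R * A 2%:R 1)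
  - A 0 1 * (A 1 0 * A 2%:R 2%:R - A 1 2%:R * A 2%:R 0)
  + A 0 2%:R * (A 1 0 * A 2%:R 1 - A 1 1 * A 2%:R 0).
Proof.
rewrite (expand_det_row _ 0) !big_ord_recl big_ord0 /cofactor.
rewrite !(expand_det_row _ 0) !big_ord_recl !big_ord0 /cofactor !det_mx11 !mxE /=.
have [f H] : exists f : nat -> nat -> R, forall i j : 'I_3, A i j = f i j.
  by exists (fun i j => A (inord i) (inord j)) => i j; rewrite !inord_val.
rewrite !H /= /bump /=. ring.
Qed.

Lemma cross9 (a0 a1 a2 b0 b1 b2 c0 c1 c2 : R) :
  a0*a0+a1*a1+a2*a2 = 1 -> b0*b0+b1*b1+b2*b2 = 1 -> c0*c0+c1*c1+c2*c2 = 1 ->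
  a0*b0+a1*b1+a2*b2 = 0 -> b0*c0+b1*c1+b2*c2 = 0 -> a0*c0+a1*c1+a2*c2 = 0 ->
  a0*(b1*c2 - b2*c1) - a1*(b0*c2 - b2*c0) + a2*(b0*c1 - b1*c0) = 1 ->
  [/\ a0 = b1*c2 - b2*c1, a1 = b2*c0 - b0*c2 & a2 = b0*c1 - b1*c0].
Proof.
move=> ha hb hc hab hbc hac hd.
have S : (b1*c2 - b2*c1 - a0)^+2 + (b2*c0 - b0*c2 - a1)^+2 + (b0*c1 - b1*c0 - a2)^+2
  = (b0*b0+b1*b1+b2*b2)*(c0*c0+c1*c1+c2*c2) - (b0*c0+b1*c1+b2*c2)^+2
    - 2 * (a0*(b1*c2 - b2*c1) - a1*(b0*c2 - b2*c0) + a2*(b0*c1 - b1*c0))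
    + (a0*a0+a1*a1+a2*a2) by ring.
rewrite hb hc hbc hd ha in S.
have P0 := sqr_ge0 (b1*c2 - b2*c1 - a0).
have P1 := sqr_ge0 (b2*c0 - b0*c2 - a1).
have P2 := sqr_ge0 (b0*c1 - b1*c0 - a2).
have E0 : (b1*c2 - b2*c1 - a0)^+2 = 0 by lra.
have E1 : (b2*c0 - b0*c2 - a1)^+2 = 0 by lra.
have E2 : (b0*c1 - b1*c0 - a2)^+2 = 0 by lra.
move/eqP: E0; move/eqP: E1; move/eqP: E2; rewrite !sqrf_eq0 !subr_eq0.
by move=> /eqP E2 /eqP E1 /eqP E0; split.
Qed.

Definition SO3s X := X *m X^T = 1%:M /\ \det X = 1.

Ltac entries A f H :=
  have [f H] : exists f : nat -> nat -> R, forall i j : 'I_3, A i j = f i j by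
    exists (fun i j => A (inord i) (inord j)) => i j; rewrite !inord_val.

Lemma m2 : ((1 %% 3 + 1 %% 3) %% 3 = 2)%N. Proof. by []. Qed.
Lemma m1 : (1 %% 3 = 1)%N. Proof. by []. Qed.
Lemma SO3_minors X : SO3s X ->
  [/\ X 0 0 = X 1 1 * X 2%:R 2%:R - X 1 2%:R * X 2%:R 1,
      X 1 1 = X 2%:R 2%:R * X 0 0 - X 2%:R 0 * X 0 2%:R &
      X 2%:R 2%:R = X 0 0 * X 1 1 - X 0 1 * X 1 0].
Proof.
move=> [hO D]; rewrite det3 in D.
have e i j : (X *m X^T) i j = (i == j)%:R by rewrite hO mxE.
have e00 := e 0 0; have e11 := e 1 1; have e22 := e 2%:R 2%:R.
have e01 := e 0 1; have e12 := e 1 2%:R; have e02 := e 0 2%:R.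
move: e00 e11 e22 e01 e12 e02; rewrite !mul3E !mxE /=.
entries X f H. rewrite !H /= !m2 !m1 in D *.
move=> e00 e11 e22 e01 e12 e02.
have [h1 _ _] := @cross9 _ _ _ _ _ _ _ _ _ e00 e11 e22 e01 e12 e02 D.
have [_ h2 _] := @cross9 (f 1 0) (f 1 1) (f 1 2) (f 2 0) (f 2 1) (f 2 2) (f 0 0) (f 0 1) (f 0 2)
  e11 e22 e00 e12 ltac:(lra) ltac:(lra) ltac:(lra).
have [_ _ h3] := @cross9 (f 2 0) (f 2 1) (f 2 2) (f 0 0) (f 0 1) (f 0 2) (f 1 0) (f 1 1) (f 1 2)
  e22 e00 e11 ltac:(lra) e01 ltac:(lra) ltac:(lra).
by split.
Qed.

Lemma detI X : SO3s X -> \det (1%:M + X) = 2 + 2 * (X 0 0 + X 1 1 + X 2%:R 2%:R).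
Proof.
move=> hX; have [h1 h2 h3] := SO3_minors _ hX; have [_ D] := hX.
rewrite det3 in D; rewrite det3 !mxE /=.
entries X f H. rewrite !H /= !m2 !m1 in D h1 h2 h3 *.
lra.
Qed.


Definition kv (a b c : R) (i : nat) := match i with 0 => a | 1 => b | _ => c end.
Definition Skf (a b c : R) (i j : nat) :=
  match i, j with 0,1 => -c | 0,2 => b | 1,0 => c | 1,2 => -a | 2,0 => -b | 2,1 => a | _,_ => 0 end.
Definition Sk a b c := mk3 (Skf a b c).
Definition nn (a b c : R) := a*a + b*b + c*c.
Definition Cayf a b c t (i j : nat) := (i == j)%:R + (1 + t*t*nn a b c)^-1 *
   (2 * (t*t) * (kv a b c i * kv a b c j - nn a b c * (i == j)%:R) - 2 * t * Skf a b c i j).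
Definition Cay a b c t := mk3 (Cayf a b c t).

Ltac ent := apply/matrixP; elim/ord3E; elim/ord3E;
  rewrite ?mul3E !mxE /= ?m2 ?m1 /=.

Lemma nn_pos a b c t : 1 + t*t*nn a b c != 0.
Proof. rewrite /nn; apply/lt0r_neq0. nra. Qed.

Lemma Cay_orth a b c t : Cay a b c t *m (Cay a b c t)^T = 1%:M.
Proof.
have := nn_pos a b c t; rewrite /nn => hp.
ent; rewrite /Cayf /kv /Skf /nn /=; by field.
Qed.

Lemma Cay_det a b c t : \det (Cay a b c t) = 1.
Proof.
have := nn_pos a b c t; rewrite /nn => hp.
rewrite det3 !mxE /= ?m2 ?m1 /Cayf /kv /Skf /nn /=; by field.
Qed.

Lemma Cay_mul a b c t : Cay a b c t *m (1%:M + t *: Sk a b c) = 1%:M - t *: Sk a b c.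
Proof.
have := nn_pos a b c t; rewrite /nn => hp.
ent; rewrite /Cayf /kv /Skf /nn /=; by field.
Qed.

Lemma Cay0 a b c : Cay a b c 0 = 1%:M.
Proof. ent; rewrite /Cayf /kv /Skf /nn /=; by field. Qed.

Lemma Sk_unit a b c t : 1%:M + t *: Sk a b c \in unitmx.
Proof.
have := nn_pos a b c t; rewrite /nn => hp.
rewrite unitmxE unitfE det3 !mxE /= ?m2 ?m1 /Skf /=.
apply: contra hp => /eqP h; apply/eqP; rewrite -h; ring.
Qed.

Lemma SO3_tr X : SO3s X -> X^T *m X = 1%:M.
Proof. by case=> h _; apply: mulmx1C. Qed.

Lemma SO3_unit X : SO3s X -> X \in unitmx.
Proof. by case=> _ d; rewrite unitmxE d unitr1. Qed.

Lemma good_path X : SO3s X -> 1%:M + X \in unitmx -> exists a b c, Cay a b c 1 = X.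
Proof.
move=> hX uU.
have XtX := SO3_tr _ hX.
set U := 1%:M + X in uU *; set V := 1%:M - X; set K := V *m invmx U.
have uUt : U^T \in unitmx by rewrite unitmx_tr.
have KU : K *m U = V by rewrite /K mulmxKV.
have skew : K^T = - K.
  rewrite /K trmx_mul trmx_inv.
  apply: (can_inj (mulKmx uUt)); apply: (can_inj (mulmxK uU)).
  rewrite mulKVmx // -mulNmx mulmxA mulmxKV //.
  have trD (A B : 'M[R]_3) : (A + B)^T = A^T + B^T by apply/matrixP => i j; rewrite !mxE.
  have trN (A : 'M[R]_3) : (- A)^T = - A^T by apply/matrixP => i j; rewrite !mxE.
  rewrite /U /V !trD trN trmx1 !mulmxDl !mulmxDr !mulNmx !mulmxN.
  rewrite !mul1mx !mulmx1 XtX.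
  rewrite ?mulmxDr ?mulmxN ?mul1mx ?mulmx1 ?XtX. apply/matrixP => i j; rewrite !mxE. ring.
clearbody K.
have sk i j : K j i = - K i j by have := congr1 (fun M : 'M[R]_3 => M i j) skew; rewrite !mxE.
set a := K 2%:R 1; set b := K 0 2%:R; set c := K 1 0.
have KS : K = Sk a b c.
  have s00 := sk 0 0; have s11 := sk 1 1; have s22 := sk 2%:R 2%:R.
  have s01 := sk 0 1; have s02 := sk 0 2%:R; have s12 := sk 1 2%:R.
  rewrite /a /b /c in s00 s11 s22 s01 s02 s12 *.
  ent; rewrite /Skf /=; lra.
have h1 : Cay a b c 1 *m (1%:M + K) = 1%:M - K.
  by have := Cay_mul a b c 1; rewrite !scale1r -KS.
have uK : 1%:M + K \in unitmx by have := Sk_unit a b c 1; rewrite scale1r -KS.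
have h2 : X *m (1%:M + K) = 1%:M - K.
  apply: (can_inj (mulmxK uU)); rewrite -mulmxA !mulmxDl mulNmx !KU !mul1mx.
  rewrite /U /V !mulmxDr !mulmxN !mulmx1.
  apply/matrixP => i j; rewrite !mxE. ring.
exists a, b, c; apply: (can_inj (mulmxK uK)); by rewrite h1 h2.
Qed.

Lemma SO3_mul X Y : SO3s X -> SO3s Y -> SO3s (X *m Y).
Proof.
move=> [hX dX] [hY dY]; split; last by rewrite det_mulmx dX dY mulr1.
by rewrite trmx_mul mulmxA -(mulmxA X) hY mulmx1 hX.
Qed.

Lemma SO3_trS X : SO3s X -> SO3s X^T.
Proof. move=> hX; split; last by rewrite det_tr; case: hX. by rewrite trmxK (SO3_tr _ hX). Qed.

Lemma not_unit_tr X : SO3s X -> 1%:M + X \notin unitmx -> X 0 0 + X 1 1 + X 2%:R 2%:R = -1.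
Proof.
move=> hX; rewrite unitmxE unitfE detI // negbK => /eqP h; lra.
Qed.

Definition Rx := mk3 (fun i j => match i, j with 0,0 => 1 | 1,2 => -1 | 2,1 => 1 | _,_ => 0 end).
Definition Rxt := mk3 (fun i j => match i, j with 0,0 => 1 | 1,2 => 1 | 2,1 => -1 | _,_ => 0 end).
Definition Ry := mk3 (fun i j => match i, j with 1,1 => 1 | 0,2 => 1 | 2,0 => -1 | _,_ => 0 end).
Definition Ryt := mk3 (fun i j => match i, j with 1,1 => 1 | 0,2 => -1 | 2,0 => 1 | _,_ => 0 end).
Definition Rz := mk3 (fun i j => match i, j with 2,2 => 1 | 0,1 => -1 | 1,0 => 1 | _,_ => 0 end).
Definition Rzt := mk3 (fun i j => match i, j with 2,2 => 1 | 0,1 => 1 | 1,0 => -1 | _,_ => 0 end).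

Ltac concrete_ok := split; [ent; lra | rewrite det3 !mxE /= ?m2 ?m1 /=; lra].
Ltac concrete_unit := rewrite unitmxE unitfE detI; [rewrite !mxE /= ?m2 ?m1 /=; apply/lt0r_neq0; lra | concrete_ok].

Lemma bad_split B : SO3s B -> 1%:M + B \notin unitmx ->
  exists D, [/\ SO3s D, 1%:M + D \in unitmx & 1%:M + D^T *m B \in unitmx].
Proof.
move=> hB nB.
have tB := not_unit_tr _ hB nB.
have T D : SO3s D -> 1%:M + D \in unitmx ->
   (exists D, [/\ SO3s D, 1%:M + D \in unitmx & 1%:M + D^T *m B \in unitmx]) \/
   (D^T *m B) 0 0 + (D^T *m B) 1 1 + (D^T *m B) 2%:R 2%:R = -1.
  move=> hD uD; case: (boolP (1%:M + D^T *m B \in unitmx)) => u.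
    by left; exists D.
  by right; apply: not_unit_tr => //; apply: SO3_mul => //; apply: SO3_trS.
case: (T Rx ltac:(concrete_ok) ltac:(concrete_unit)) => [//|h1].
case: (T Rxt ltac:(concrete_ok) ltac:(concrete_unit)) => [//|h2].
case: (T Ry ltac:(concrete_ok) ltac:(concrete_unit)) => [//|h3].
case: (T Ryt ltac:(concrete_ok) ltac:(concrete_unit)) => [//|h4].
case: (T Rz ltac:(concrete_ok) ltac:(concrete_unit)) => [//|h5].
case: (T Rzt ltac:(concrete_ok) ltac:(concrete_unit)) => [//|h6].
exfalso.
rewrite !mul3E !mxE /= ?m2 ?m1 /= in h1 h2 h3 h4 h5 h6.
move: tB h1 h2 h3 h4 h5 h6; entries B f H; rewrite !H /= ?m2 ?m1 /=.
lra.
Qed.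
Lemma mx_cont (X : topologicalType) m n (F : X -> 'M[R]_(m,n)) :
  (forall i j, continuous (fun x => F x i j)) -> continuous F.
Proof.
move=> Fc x A [P PM sPA].
have : \forall y \near x, forall i j, P i j (F y i j).
  apply: filter_forall => i; apply: filter_forall => j; exact: (Fc i j x _ (PM i j)).
by apply: filterS => y hy; apply: sPA.
Qed.

Lemma entry_cont (X : topologicalType) m n (F : X -> 'M[R]_(m,n)) i j :
  continuous F -> continuous (fun x => F x i j).
Proof. move=> Fc x; exact: (continuous_comp (Fc x) (@coord_continuous R m n i j (F x))). Qed.

Lemma contD (X : topologicalType) (f g : X -> R) :
  continuous f -> continuous g -> continuous (fun x => f x + g x).
Proof. move=> fc gc x; exact: (continuousD (fc x) (gc x)). Qed.

Lemma contM (X : topologicalType) (f g : X -> R) :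
  continuous f -> continuous g -> continuous (fun x => f x * g x).
Proof. move=> fc gc x; exact: (continuousM (fc x) (gc x)). Qed.

Lemma contC (X : topologicalType) (c : R) : continuous (fun _ : X => c).
Proof. move=> x; exact: cvg_cst. Qed.

Lemma contV (X : topologicalType) (f : X -> R) :
  (forall x, f x != 0) -> continuous f -> continuous (fun x => (f x)^-1).
Proof. move=> nz fc x; exact: (continuousV (nz x) (fc x)). Qed.

Lemma contN (X : topologicalType) (f : X -> R) :
  continuous f -> continuous (fun x => - f x).
Proof. move=> fc x; exact: (continuousN (fc x)). Qed.

Lemma contId : continuous (fun x : R => x).
Proof. by move=> x. Qed.

Lemma LC (G : set 'M[R]_3) (fin : finite_set G) (psi : R -> 'M[R]_3) :
  continuous psi -> (forall t, G (psi t)) -> psi 0 = psi 1.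
Proof.
move=> pc pG; apply/matrixP => i j.
set d := fun t => psi t i j.
have dc : continuous d := @entry_cont _ _ _ _ i j pc.
apply: contrapT => ne.
set lo := Num.min (d 0) (d 1); set hi := Num.max (d 0) (d 1).
have lohi : lo < hi.
  rewrite /lo /hi; case: (ltgtP (d 0) (d 1)) => //.
set V := (fun M : 'M[R]_3 => M i j) @` G.
have inV v : lo <= v <= hi -> V v.
  move=> hv.
  have [c _ dcv] := @IVT R d 0 1 v ler01 (continuous_subspaceT dc) hv.
  by exists (psi c) => //.
pose u (k : nat) := lo + (hi - lo) / k.+1%:R.
have uV : u @` setT `<=` V.
  move=> _ [k _ <-]; apply: inV; rewrite /u.
  have hk : 0 < k.+1%:R :> R by rewrite ltr0n.
  have h1 : 0 <= (hi - lo) / k.+1%:R by apply: divr_ge0; [rewrite subr_ge0 ltW | exact: ltW].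
  have h2 : (hi - lo) / k.+1%:R <= hi - lo.
    rewrite ler_pdivrMr // ler_peMr ?ler1n //.
    by rewrite subr_ge0 ltW.
  move: h1 h2; generalize ((hi - lo) / k.+1%:R) => w h1 h2; clearbody lo hi; apply/andP; split; lra.
have uinj : {in setT &, injective u}.
  move=> k l _ _ e.
  have nz : hi - lo != 0 by rewrite subr_eq0 gt_eqF.
  have e2 : (hi - lo) / k.+1%:R = (hi - lo) / l.+1%:R by apply: (addrI lo).
  have e3 : (k.+1%:R : R)^-1 = (l.+1%:R)^-1.
    by apply: (mulfI nz).
  move/invr_inj/eqP: e3; rewrite eqr_nat => /eqP [].
  by [].
have : finite_set (u @` setT).
  apply: sub_finite_set uV _; exact: finite_image.
rewrite (eq_finite_set (inj_card_eq uinj)); exact: infinite_nat.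
Qed.

Lemma Cayf_cont a b c (i j : nat) : continuous (fun t => Cayf a b c t i j).
Proof.
rewrite /Cayf.
apply: contD; first exact: contC.
apply: contM.
  apply: contV; first by move=> t; exact: nn_pos.
  apply: contD; first exact: contC.
  apply: contM; last exact: contC.
  exact: contM contId contId.
apply: contD.
  apply: contM; last exact: contC.
  apply: contM; first exact: contC.
  exact: contM contId contId.
apply: contN.
apply: contM; last exact: contC.
exact: contM (contC _ _) contId.
Qed.

Lemma Cay_SO3 (a b c t : R) : SO3set (Cay a b c t).
Proof. split; [exact: Cay_orth | exact: Cay_det]. Qed.


Lemma pG_cont (G : finSubgroupSO3 R) : continuous (pG G).
Proof. exact: pi_continuous. Qed.
Lemma val_cont : continuous (fun x : SO3 R => val x).
Proof. exact: initial_continuous. Qed.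
Lemma pG_eq (G : finSubgroupSO3 R) (x y : SO3 R) : pG G x = pG G y -> fsg_set G (invmx (val x) *m val y).
Proof.
move=> h. have : coset_rel G x y.
  apply/(eqquotP {eq_quot coset_equiv G}). exact: h.
by move/asboolP.
Qed.
Lemma pG_eq2 (G : finSubgroupSO3 R) (x y : SO3 R) : fsg_set G (invmx (val x) *m val y) -> pG G x = pG G y.
Proof. move=> h. apply/(eqquotP {eq_quot coset_equiv G}). by apply/asboolP. Qed.

End Helpers.

Theorem corollary10 (R : realType) (G : finSubgroupSO3 R) (n : nat)
    (g : SO3 R -> 'rV[R]_n) :
  (exists A : 'M[R]_3, fsg_set G A /\ A <> 1%:M) ->
  embedding g ->
  ~ (exists f : SO3modG G -> set_type (range g),
       continuous f /\
       (forall (Q : SO3modG G) (x : SO3 R), g x = val (f Q) -> pG G x = Q)).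
Proof.
move=> [A [GA A1]] [gc ginj [h [hc hg]]] [f [fc fsec]].
pose s := fun Q => h (f Q).
have sc : continuous s.
  by move=> Q; apply: continuous_comp; [exact: fc | exact: hc].
have ssec Q : pG G (s Q) = Q by apply: fsec; rewrite /s hg.
pose S (x : SO3 R) : 'M[R]_3 := val (s (pG G x)).
have Sc : continuous S := fun x =>
  continuous_comp (continuous_comp (@pG_cont R G x) (sc _)) (@val_cont R _).
pose F (x : SO3 R) := (val x)^T *m S x.
have inSO (x : SO3 R) : SO3s R (val x) := set_mem (valP x).
have invT (x : SO3 R) : invmx (val x) = (val x)^T.
  have uX := SO3_unit _ _ (inSO x).
  by rewrite -[(val x)^T](mulmxK uX) (SO3_tr _ _ (inSO x)) mul1mx.
have FG x : fsg_set G (F x).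
  have := @pG_eq R G _ _ (esym (ssec (pG G x))).
  by rewrite invT.
have Fc : continuous F.
  apply: mx_cont => i j.
  have -> : (fun x => F x i j) = fun x => val x 0 i * S x 0 j + val x 1 i * S x 1 j
      + val x 2%:R i * S x 2%:R j.
    by apply: funext => x; rewrite /F mul3E !mxE.
  by apply: contD; [apply: contD|]; apply: contM; apply: entry_cont;
    (exact: val_cont || exact: Sc).
have PE (x y : SO3 R) (a b c : R) : val y = val x *m Cay R a b c 1 -> F x = F y.
  move=> ey.
  pose gam (t : R) : SO3 R := exist _ (val x *m Cay R a b c t)
     (mem_set (SO3_mul _ _ _ (inSO x) (@Cay_SO3 R a b c t))).
  have gamc : continuous gam.
    apply: continuous_comp_initial.
    apply: mx_cont => i j /=.
    have -> : (fun t => (val x *m Cay R a b c t) i j) = fun t =>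
      val x i 0 * Cayf R a b c t 0 j + val x i 1 * Cayf R a b c t 1 j
      + val x i 2%:R * Cayf R a b c t 2%:R j.
      by apply: funext => t; rewrite mul3E !mk3E.
    by apply: contD; [apply: contD|]; apply: contM; (exact: contC || exact: Cayf_cont).
  have := @LC R _ (fsg_finite G) _ (fun t => continuous_comp (gamc t) (Fc (gam t))) (fun t => FG (gam t)).
  move=> /= E.
  have g0 : gam 0 = x by apply: val_inj; rewrite /= Cay0 mulmx1.
  have g1 : gam 1 = y by apply: val_inj; rewrite /= ey.
  by rewrite -g0 -g1.
have hA : SO3s R A := fsg_sub GA.
pose one : SO3 R := exist _ 1%:M (mem_set (fsg_sub (fsg_one G))).
pose Ae : SO3 R := exist _ A (mem_set hA).
have E : F one = F Ae.
  case: (boolP (1%:M + A \in unitmx)) => uA.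
    have [a [b [c hc']]] := good_path _ _ hA uA.
    by apply: (PE _ _ a b c); rewrite /= mul1mx hc'.
  have [D [hD uD uDA]] := bad_split _ _ hA uA.
  pose De : SO3 R := exist _ D (mem_set hD).
  have [a [b [c hc']]] := good_path _ _ hD uD.
  have [a' [b' [c' hc'']]] := good_path _ _ (SO3_mul _ _ _ (SO3_trS _ _ hD) hA) uDA.
  rewrite (PE one De a b c); last by rewrite /= mul1mx hc'.
  apply: (PE _ _ a' b' c'); rewrite /= hc'' mulmxA.
  by have [hD1 _] := hD; rewrite hD1 mul1mx.
have pA : pG G one = pG G Ae by apply: pG_eq2; rewrite /= invmx1 mul1mx.
move: E; rewrite /F /S /= -pA trmx1 mul1mx => E.
have uS := SO3_unit _ _ (inSO (s (pG G one))).
have : A^T = 1%:M.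
  have := congr1 (mulmx^~ (invmx (val (s (pG G one))))) E.
  by rewrite mulmxV // -mulmxA mulmxV // mulmx1 => <-.
move=> /(congr1 trmx); rewrite trmxK trmx1; exact: A1.
Qed.
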